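(* For every finite-dimensional complex representation $V$ of $S_n$, \[ \mathrm{ch}\,\mathrm{Ind}\,V=\mathcal F(V)[H], \] where $H=\sum_{\mathbf x\in\mathbf N^n}t^{\mathbf x}=\sum_{k\ge0}h_k(t_1,\dots,t_n)$.
   Context: $S_n$ is regarded as the subgroup of permutation matrices in $\mathrm{GL}_n(\mathbf C)$. $M_n$ is the space of $n\times n$ complex matrices and $P^d(M_n)$ the homogeneous polynomials of degree $d$ in the entries of $Q\in M_n$. For a representation $(\rho,V)$ of $S_n$, $\mathrm{Ind}^dV=\{f\in P^d(M_n)\otimes V: f(wQ)=\rho(w)f(Q)\ \forall w\in S_n,Q\in M_n\}$ (elements viewed as $V$-valued polynomial functions on $M_n$), a polynomial representation of $\mathrm{GL}_n(\mathbf C)$ via $(\mathrm{Ind}^d\rho(g)f)(Q)=f(Qg)$. The character of a polynomial representation $\sigma$ of $\mathrm{GL}_n(\mathbf C)$ is $\mathrm{ch}\,\sigma(t_1,\dots,t_n)=\mathrm{trace}\,\sigma(\mathrm{diag}(t_1,\dots,t_n))$, and $\mathrm{ch}\,\mathrm{Ind}\,V:=\sum_{d\ge0}\mathrm{ch}\,\mathrm{Ind}^dV$, a symmetric formal power series in $t_1,\dots,t_n$. $\mathcal F(V)$ is the Frobenius characteristic of the character of $V$ (so $\mathcal F(V_\mu)=s_\mu$ for Specht modules). For $\mathbf x\in\mathbf N^n$, $t^{\mathbf x}=t_1^{x_1}\dotsb t_n^{x_n}$. Plethysm: if $g$ is a (possibly infinite) sum of monic monomials $t^{\mathbf x_1}+t^{\mathbf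 x_2}+\dotsb$ and $f$ a symmetric function, $f[g]=f(t^{\mathbf x_1},t^{\mathbf x_2},\dots)$. *)

(* Defs.v *)
From HB Require Import structures.
From mathcomp Require Import all_boot all_order all_algebra all_fingroup.
From mathcomp Require Import all_solvable all_field all_character.
From mathcomp Require Import mpoly.

Set Implicit Arguments.
Unset Strict Implicit.
Unset Printing Implicit Defensive.

Import Order.TTheory GRing.Theory Num.Theory.
Local Open Scope ring_scope.

(* The complex numbers are modelled by algC (algebraically closed field of
   characteristic 0, mathcomp's field for character theory). *)

Definition trace_on (W : lmodType algC) (U : W -> Prop) (A : W -> W)
  (c : algC) : Prop :=
  exists (r : nat) (u : 'I_r -> W) (a : 'M[algC]_r),
    [/\ forall i, U (u i),
        forall lam : 'I_r -> algC,
          \sum_(i < r) lam i *: u i = 0 -> forall i, lam i = 0,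
        forall w, U w -> exists lam : 'I_r -> algC, w = \sum_(i < r) lam i *: u i,
        forall j, A (u j) = \sum_(i < r) a i j *: u i
      & c = \tr a].

(* Polynomials on M_n: {mpoly algC[n*n]}, the variable mxvec_index i j
   being the entry Q_ij. *)

Definition mx_vars n (Q : 'M[algC]_n) : 'I_(n * n) -> algC :=
  fun v => mxvec Q 0 v.

Definition Xmat n : 'M[{mpoly algC[n * n]}]_n :=
  vec_mx (\row_(v < n * n) 'X_v).

(* V-valued polynomials on M_n, V = algC^m (column vectors):
   elements of P(M_n) (x) V, given by their m coordinates. *)
Definition VPol (n m : nat) := {ffun 'I_m -> {mpoly algC[n * n]}}.

Definition evalV n m (f : VPol n m) (Q : 'M[algC]_n) : 'cV[algC]_m :=
  \col_(k < m) (f k).@[mx_vars Q].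

(* (g . f)(Q) = f(Q g), computed as a polynomial by substitution *)
Definition act n m (g : 'M[algC]_n) (f : VPol n m) : VPol n m :=
  [ffun k => f k \mPo
     [tuple mxvec (Xmat n *m map_mx (fun c => c%:MP) g) 0 v | v < n * n]].

(* Ind^d V, for a representation rG of S_n (= {perm 'I_n}, seen inside
   GL_n via perm_mx) on V = algC^m (column vectors, rG w acting by
   left multiplication) *)
Definition IndV n m (rG : mx_representation algC [set: 'S_n] m) (d : nat)
  (f : VPol n m) : Prop :=
  (forall k, f k \is d.-homog) /\
  (forall (w : 'S_n) (Q : 'M[algC]_n),
      evalV f (perm_mx w *m Q) = rG w *m evalV f Q).

Definition is_ch_Ind n m (rG : mx_representation algC [set: 'S_n] m)
  (d : nat) (P : {mpoly algC[n]}) : Prop :=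
  forall t : 'I_n -> algC, (forall i, t i != 0) ->
    trace_on (IndV rG d) (act (diag_mx (\row_i t i))) P.@[t].

Definition psum (N k : nat) : {mpoly algC[N]} := \sum_(j < N) 'X_j ^+ k.

Definition frob n (chi : 'CF([set: 'S_n])) (N : nat) : {mpoly algC[N]} :=
  (n`!%:R)^-1 *: \sum_(w : 'S_n)
     chi w *: \prod_(c in porbits w) psum N #|c|.

(* Eventually constant sequence (limit in the formal/discrete topology). *)
Definition ev_lim (u : nat -> algC) (c : algC) : Prop :=
  exists B, forall b, (B <= b)%N -> u b = c.

(* Plethysm f[H], H = sum_{x in N^n} t^x, truncated to the monomials t^x
   with |x| < b: f(t^{x_1},..,t^{x_N}) where x_1,..,x_N enumerate the
   x with mdeg x < b.  The coefficient of t^a in f[H] is the limit as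
   b -> oo of the coefficient of t^a in these truncations. *)
Definition pleth_trunc n (f : forall N, {mpoly algC[N]}) (b : nat)
  : {mpoly algC[n]} :=
  f #|{: 'X_{1..n < b}}| \mPo
    [tuple 'X_[(enum_val k : 'X_{1..n < b}) : 'X_{1..n}]
       | k < #|{: 'X_{1..n < b}}|].

Definition pleth_coeff n (f : forall N, {mpoly algC[N]}) (a : 'X_{1..n})
  (c : algC) : Prop :=
  ev_lim (fun b => (pleth_trunc n f b)@_a) c.

Definition series_coeff n (P : nat -> {mpoly algC[n]}) (a : 'X_{1..n})
  (c : algC) : Prop :=
  ev_lim (fun D => \sum_(d < D) (P d)@_a) c.

(* Main.v *)
Require Import Defs.
From HB Require Import structures.
From mathcomp Require Import all_boot all_order all_algebra all_fingroup.
From mathcomp Require Import all_solvable all_field all_character.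
From mathcomp Require Import mpoly.

Set Implicit Arguments.
Unset Strict Implicit.
Unset Printing Implicit Defensive.
Import Order.TTheory GRing.Theory Num.Theory.
Local Open Scope ring_scope.

Lemma poly_roots_all0 (q : {poly algC}) : (forall z, q.[z] = 0) -> q = 0.
Proof.
move=> h; apply/eqP; apply/negPn/negP => nz.
set rs := [seq (i%:R : algC) | i <- iota 0 (size q)].
have r1 : all (root q) rs by apply/allP => z _; apply/rootP/h.
have r2 : uniq rs.
  rewrite map_inj_uniq ?iota_uniq // => i j /eqP; rewrite eqC_nat => /eqP.
  by [].
by have := max_poly_roots nz r1 r2; rewrite size_map size_iota ltnn.
Qed.

Definition mlow k (m : 'X_{1..k.+1}) : 'X_{1..k} :=
  [multinom m (widen_ord (leqnSn k) i) | i < k].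

Definition cj k (p : {mpoly algC[k.+1]}) (j : nat) : {mpoly algC[k]} :=
  \sum_(m <- msupp p | m ord_max == j) p@_m *: 'X_[mlow m].

Lemma leq_mnm_mdeg k (m : 'X_{1..k}) i : (m i <= mdeg m)%N.
Proof. by rewrite mdegE (bigD1 i) //= leq_addr. Qed.

Lemma meval_split k (p : {mpoly algC[k.+1]}) x :
  p.@[x] = \sum_(j < msize p)
     (cj p j).@[fun i => x (widen_ord (leqnSn k) i)] * x ord_max ^+ j.
Proof.
rewrite mevalE.
rewrite (eq_bigr (fun j : 'I_(msize p) => \sum_(m <- msupp p | m ord_max == j)
    p@_m * \prod_i x i ^+ m i)); last first.
  move=> j _; rewrite /cj raddf_sum /= mulr_suml; apply: eq_bigr => m /eqP <-.
  rewrite mevalZ mevalX big_ord_recr /= mulrA; congr (_ * _ * _).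
  by apply: eq_bigr => i _; rewrite mnmE.
rewrite (exchange_big_dep xpredT) //=; rewrite big_seq_cond [RHS]big_seq_cond.
apply: eq_bigr => m /andP[mp _].
have lt : (m ord_max < msize p)%N.
  exact: leq_ltn_trans (leq_mnm_mdeg _ _) (msize_mdeg_lt mp).
rewrite (big_pred1 (Ordinal lt)) // => j /=.
by rewrite eq_sym -val_eqE.
Qed.

Lemma eq_mnm_split k (m m' : 'X_{1..k.+1}) :
  (m' == m) = (m' ord_max == m ord_max) && (mlow m' == mlow m).
Proof.
apply/eqP/andP => [-> //|[/eqP h1 /eqP h2]]; apply/mnmP => i.
have [lt|ge] := ltnP i k.
  have -> : i = widen_ord (leqnSn k) (Ordinal lt) by apply: val_inj.
  by move: (congr1 (fun u : 'X_{1..k} => u (Ordinal lt)) h2); rewrite !mnmE.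
have -> : i = ord_max.
  by apply/val_inj/eqP; rewrite /= eqn_leq ge -ltnS ltn_ord.
exact: h1.
Qed.

Lemma mcoeff_cj k (p : {mpoly algC[k.+1]}) m :
  (cj p (m ord_max))@_(mlow m) = p@_m.
Proof.
have -> : p@_m = (\sum_(m' <- msupp p) p@_m' *: 'X_[m'])@_m by rewrite -mpolyE.
rewrite /cj !raddf_sum /= big_mkcond /=.
apply: eq_bigr => m' _; rewrite !mcoeffZ !mcoeffX eq_mnm_split.
by case: (m' ord_max == m ord_max); rewrite ?mulr0.
Qed.

Lemma meval_inj k (p : {mpoly algC[k]}) : (forall x, p.@[x] = 0) -> p = 0.
Proof.
elim: k p => [|k IH] p h.
  have e : p = (\sum_(m <- msupp p) p@_m)%:MP.
    rewrite {1}[p]mpolyE rmorph_sum; apply: eq_bigr => m _.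
    have -> : m = 0%MM by apply/mnmP => -[].
    by rewrite mpolyX0 alg_mpolyC.
  by move: (h (fun _ => 0)); rewrite e mevalC => ->.
apply/mpolyP => m; rewrite mcoeff0 -mcoeff_cj.
suff -> : cj p (m ord_max) = 0 by rewrite mcoeff0.
have [lt|ge] := ltnP (m ord_max) (msize p); last first.
  rewrite /cj big_seq_cond big1 // => m' /andP[mp /eqP e].
  have := leq_ltn_trans (leq_mnm_mdeg m' ord_max) (msize_mdeg_lt mp).
  by rewrite e ltnNge ge.
apply: IH => y.
pose q := \poly_(j < msize p) (cj p j).@[y].
have q0 : q = 0.
  apply: poly_roots_all0 => z; rewrite horner_poly.
  pose x := fun i : 'I_k.+1 => if unlift ord_max i is Some i' then y i' else z.
  have hx : (fun i => x (widen_ord (leqnSn k) i)) =1 y.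
    move=> i; rewrite /x.
    have -> : widen_ord (leqnSn k) i = lift ord_max i by apply/val_inj; rewrite /= /bump leqNgt ltn_ord.
    by rewrite liftK.
  have hm : x ord_max = z by rewrite /x unlift_none.
  transitivity (p.@[x]); last exact: h x.
  rewrite meval_split; apply: eq_bigr => j _.
  by rewrite hm (meval_eq _ hx).
by move: (congr1 (fun r : {poly algC} => r`_(m ord_max)) q0); rewrite coef_poly lt coef0.
Qed.

Lemma meval_inj_nz k (p : {mpoly algC[k]}) :
  (forall x, (forall i, x i != 0) -> p.@[x] = 0) -> p = 0.
Proof.
move=> h.
have : p * \prod_i 'X_i = 0.
  apply: meval_inj => x; rewrite mevalM rmorph_prod /=.
  case: (boolP [forall i, x i != 0]) => [/forallP hx|/forallPn [i /negPn /eqP xi]].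
    by rewrite h // mul0r.
  by rewrite (bigD1 i) //= mevalXU xi mul0r mulr0.
move/eqP; rewrite mulf_eq0 => /orP[/eqP //| h0]; exfalso; move: h0.
apply/negP/prodf_neq0 => i _; apply/eqP => h0; have := congr1 (mcoeff U_(i)) h0.
by rewrite mcoeffX eqxx mcoeff0 => /eqP; rewrite oner_eq0.
Qed.

Definition rowv n (v : 'I_(n * n)) : 'I_n :=
  (enum_val (cast_ord (esym (mxvec_cast n n)) v)).1.
Definition colv n (v : 'I_(n * n)) : 'I_n :=
  (enum_val (cast_ord (esym (mxvec_cast n n)) v)).2.

Lemma rowvE n (i j : 'I_n) : rowv (mxvec_index i j) = i.
Proof. by rewrite /rowv /mxvec_index cast_ordK enum_rankK. Qed.
Lemma colvE n (i j : 'I_n) : colv (mxvec_index i j) = j.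
Proof. by rewrite /colv /mxvec_index cast_ordK enum_rankK. Qed.

Lemma XmatE n i j : Xmat n i j = 'X_(mxvec_index i j).
Proof. by rewrite /Xmat !mxE. Qed.

Lemma meval_mxvec n (M : 'M[{mpoly algC[n * n]}]_n) x v :
  (mxvec M 0 v).@[x] = mxvec (map_mx (meval x) M) 0 v.
Proof. by case/mxvec_indexP: v => i j; rewrite !mxvecE mxE. Qed.

Lemma comp_evalM n (M : 'M[{mpoly algC[n * n]}]_n) (f : {mpoly algC[n * n]}) x :
  (f \mPo [tuple mxvec M 0 v | v < n * n]).@[x] =
  f.@[fun v => mxvec (map_mx (meval x) M) 0 v].
Proof.
by rewrite comp_mpoly_meval; apply: meval_eq => v; rewrite tnth_mktuple meval_mxvec.
Qed.

Lemma map_Xmat n (Q : 'M[algC]_n) : map_mx (@meval (n * n) _ (mx_vars Q)) (Xmat n) = Q.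
Proof. by apply/matrixP => i j; rewrite mxE XmatE mevalXU /mx_vars mxvecE. Qed.

Lemma map_polyC_mx n x (g : 'M[algC]_n) :
  map_mx (@meval (n * n) _ x) (map_mx (fun c => c%:MP) g) = g.
Proof. by apply/matrixP => i j; rewrite !mxE mevalC. Qed.

Lemma eval_compR n (f : {mpoly algC[n * n]}) (g Q : 'M[algC]_n) :
  (f \mPo [tuple mxvec (Xmat n *m map_mx (fun c => c%:MP) g) 0 v | v < n * n]).@[mx_vars Q]
  = f.@[mx_vars (Q *m g)].
Proof. by rewrite comp_evalM map_mxM map_Xmat map_polyC_mx. Qed.

Lemma eval_compL n (f : {mpoly algC[n * n]}) (g Q : 'M[algC]_n) :
  (f \mPo [tuple mxvec (map_mx (fun c => c%:MP) g *m Xmat n) 0 v | v < n * n]).@[mx_vars Q]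
  = f.@[mx_vars (g *m Q)].
Proof. by rewrite comp_evalM map_mxM map_Xmat map_polyC_mx. Qed.

Lemma evalV_act n m (g : 'M[algC]_n) (f : VPol n m) Q :
  evalV (Defs.act g f) Q = evalV f (Q *m g).
Proof. by apply/matrixP => k l; rewrite !mxE ffunE eval_compR. Qed.

Definition actL n m (g : 'M[algC]_n) (f : VPol n m) : VPol n m :=
  [ffun k => f k \mPo
     [tuple mxvec (map_mx (fun c => c%:MP) g *m Xmat n) 0 v | v < n * n]].

Lemma evalV_actL n m (g : 'M[algC]_n) (f : VPol n m) Q :
  evalV (actL g f) Q = evalV f (g *m Q).
Proof. by apply/matrixP => k l; rewrite !mxE ffunE eval_compL. Qed.

Lemma evalVD n m (f g : VPol n m) Q : evalV (f + g) Q = evalV f Q + evalV g Q.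
Proof. by apply/matrixP => k l; rewrite !mxE ffunE mevalD. Qed.
Lemma evalVZ n m c (f : VPol n m) Q : evalV (c *: f) Q = c *: evalV f Q.
Proof. by apply/matrixP => k l; rewrite !mxE ffunE mevalZ. Qed.
Lemma evalV0 n m Q : evalV (0 : VPol n m) Q = 0.
Proof. by apply/matrixP => k l; rewrite !mxE ffunE meval0. Qed.
Lemma evalV_sum n m I (r : seq I) (P : pred I) (F : I -> VPol n m) Q :
  evalV (\sum_(i <- r | P i) F i) Q = \sum_(i <- r | P i) evalV (F i) Q.
Proof.
elim/big_rec2: _ => [|i y1 y2 _ <-]; first exact: evalV0.
by rewrite evalVD.
Qed.

Lemma evalV_inj n m (f g : VPol n m) : (forall Q, evalV f Q = evalV g Q) -> f = g.
Proof.
move=> h; apply/ffunP => k; apply/eqP; rewrite -subr_eq0; apply/eqP.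
apply: meval_inj => x.
have e : forall p : {mpoly algC[n * n]}, p.@[mx_vars (vec_mx (\row_v x v))] = p.@[x].
  by move=> p; apply: meval_eq => v; rewrite /mx_vars vec_mxK mxE.
have := congr1 (fun M : 'cV_m => M k 0) (h (vec_mx (\row_v x v))).
by rewrite /= !mxE !e mevalB => ->; rewrite subrr.
Qed.

Definition sig n m (rG : mx_representation algC [set: 'S_n] m) (w : 'S_n)
  (f : VPol n m) : VPol n m :=
  [ffun k => \sum_l rG (w^-1)%g k l *: actL (perm_mx w) f l].

Lemma evalV_sig n m (rG : mx_representation algC [set: 'S_n] m) w f Q :
  evalV (sig rG w f) Q = rG (w^-1)%g *m evalV f (perm_mx w *m Q).
Proof.
rewrite -evalV_actL; apply/matrixP => k z; rewrite !mxE ffunE raddf_sum /=.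
by apply: eq_bigr => l _; rewrite mevalZ !mxE.
Qed.

Definition Rop n m (rG : mx_representation algC [set: 'S_n] m) (f : VPol n m)
  : VPol n m := (n`!%:R)^-1 *: \sum_(w : 'S_n) sig rG w f.

Lemma evalV_Rop n m (rG : mx_representation algC [set: 'S_n] m) f Q :
  evalV (Rop rG f) Q =
  (n`!%:R)^-1 *: \sum_(w : 'S_n) rG (w^-1)%g *m evalV f (perm_mx w *m Q).
Proof.
by rewrite evalVZ evalV_sum; congr (_ *: _); apply: eq_bigr => w _; rewrite evalV_sig.
Qed.

Lemma Rop_inv n m (rG : mx_representation algC [set: 'S_n] m) f w Q :
  evalV (Rop rG f) (perm_mx w *m Q) = rG w *m evalV (Rop rG f) Q.
Proof.
rewrite !evalV_Rop -scalemxAr mulmx_sumr; congr (_ *: _).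
rewrite (reindex (fun u => (u * w^-1)%g)) /=; last first.
  by exists (fun u => (u * w)%g) => u _; rewrite ?mulgKV ?mulgK.
apply: eq_bigr => u _.
rewrite invMg invgK (repr_mxM rG) ?in_setT // -mulmxA.
by congr (_ *m (_ *m evalV f _)); rewrite mulmxA -perm_mxM mulgKV.
Qed.

Lemma fact_neq0 n : (n`!%:R : algC) != 0.
Proof. by rewrite pnatr_eq0 -lt0n fact_gt0. Qed.

Lemma Rop_fix n m (rG : mx_representation algC [set: 'S_n] m) f :
  (forall w Q, evalV f (perm_mx w *m Q) = rG w *m evalV f Q) -> Rop rG f = f.
Proof.
move=> h; apply: evalV_inj => Q; rewrite evalV_Rop.
rewrite (eq_bigr (fun _ => evalV f Q)); last first.
  by move=> w _; rewrite h mulmxA -(repr_mxM rG) ?in_setT // mulVg repr_mx1 mul1mx.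
by rewrite sumr_const card_Sn -scaler_nat scalerA mulVf ?fact_neq0 // scale1r.
Qed.

Lemma Rop_idem n m (rG : mx_representation algC [set: 'S_n] m) f :
  Rop rG (Rop rG f) = Rop rG f.
Proof. by apply: Rop_fix => w Q; rewrite Rop_inv. Qed.

Lemma Rop_act n m (rG : mx_representation algC [set: 'S_n] m) g f :
  Defs.act g (Rop rG f) = Rop rG (Defs.act g f).
Proof.
apply: evalV_inj => Q; rewrite evalV_act !evalV_Rop; congr (_ *: _).
by apply: eq_bigr => w _; rewrite evalV_act mulmxA.
Qed.

Lemma prod_homog k I (r : seq I) (F : I -> {mpoly algC[k]}) (D : I -> nat) :
  (forall i, F i \is (D i).-homog) ->
  \prod_(i <- r) F i \is (\sum_(i <- r) D i)%N.-homog.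
Proof.
move=> h; elim: r => [|i r IH]; first by rewrite !big_nil dhomog1.
by rewrite !big_cons; apply: dhomogM.
Qed.

Lemma comp_homog k k' (p : {mpoly algC[k]}) (lq : k.-tuple {mpoly algC[k']}) d :
  p \is d.-homog -> (forall i, tnth lq i \is 1.-homog) ->
  p \mPo lq \is d.-homog.
Proof.
move=> hp hq; rewrite comp_mpolyEX big_seq; apply: rpred_sum => m mp; apply: rpredZ.
rewrite comp_mpolyX -(dhomog_mf hp mp).
have e : (\sum_(i < k) (1 * m i))%N = mdeg m.
  by rewrite mdegE; apply: eq_bigr => i _; rewrite mul1n.
rewrite /= -e.
by apply: prod_homog => i; apply: dhomogMn.
Qed.

Lemma tupL_homog n (g : 'M[algC]_n) v :
  tnth [tuple mxvec (map_mx (fun c => c%:MP) g *m Xmat n) 0 v | v < n * n] v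
    \is 1.-homog.
Proof.
rewrite tnth_mktuple; case/mxvec_indexP: v => i j; rewrite mxvecE mxE.
apply: rpred_sum => l _; rewrite mxE XmatE mul_mpolyC; apply: rpredZ.
by rewrite dhomogX /= mdeg1.
Qed.

Lemma tupR_homog n (g : 'M[algC]_n) v :
  tnth [tuple mxvec (Xmat n *m map_mx (fun c => c%:MP) g) 0 v | v < n * n] v
    \is 1.-homog.
Proof.
rewrite tnth_mktuple; case/mxvec_indexP: v => i j; rewrite mxvecE mxE.
apply: rpred_sum => l _; rewrite XmatE mxE mulrC mul_mpolyC; apply: rpredZ.
by rewrite dhomogX /= mdeg1.
Qed.

Definition homV n m d (f : VPol n m) := forall k, f k \is d.-homog.

Lemma act_homog n m d g (f : VPol n m) : homV d f -> homV d (Defs.act g f).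
Proof. by move=> h k; rewrite ffunE; apply: comp_homog => //; apply: tupR_homog. Qed.

Lemma sig_homog n m (rG : mx_representation algC [set: 'S_n] m) d w (f : VPol n m) :
  homV d f -> homV d (sig rG w f).
Proof.
move=> h k; rewrite ffunE; apply: rpred_sum => l _; apply: rpredZ.
by rewrite ffunE; apply: comp_homog => //; apply: tupL_homog.
Qed.

Lemma Rop_homog n m (rG : mx_representation algC [set: 'S_n] m) d (f : VPol n m) :
  homV d f -> homV d (Rop rG f).
Proof.
move=> h k; rewrite ffunE sum_ffunE; apply: rpredZ; apply: rpred_sum => w _.
exact: sig_homog.
Qed.

Lemma Rop_IndV n m (rG : mx_representation algC [set: 'S_n] m) d (f : VPol n m) :
  homV d f -> IndV rG d (Rop rG f).
Proof. by move=> h; split; [apply: Rop_homog | move=> w Q; apply: Rop_inv]. Qed.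

Lemma IndV_Rop n m (rG : mx_representation algC [set: 'S_n] m) d (f : VPol n m) :
  IndV rG d f -> Rop rG f = f.
Proof. by case=> _ h; apply: Rop_fix. Qed.

Lemma trace_restrict N (P T : 'M[algC]_N) :
  P *m P = P -> P *m T = T *m P ->
  exists a : 'M_(\rank P),
    row_base P *m T = a *m row_base P /\ \tr a = \tr (P *m T).
Proof.
move=> PP PT; set B := row_base P.
have BP : (B <= P)%MS by rewrite eq_row_base.
have PB : (P <= B)%MS by rewrite eq_row_base.
have BT : (B *m T <= B)%MS.
  apply: submx_trans PB; have [D ->] := submxP BP.
  by rewrite -mulmxA PT mulmxA submxMl.
exists (B *m T *m pinvmx B); split; first by rewrite mulmxKpV.
set C := P *m pinvmx B.
have PC : P = C *m B by rewrite mulmxKpV.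
have BPB : B *m P = B by have [D ->] := submxP BP; rewrite -mulmxA PP.
have BC : B *m C = 1%:M.
  apply: (row_free_inj (row_base_free P)); rewrite mul1mx -mulmxA -PC.
  exact: BPB.
have -> : P *m T = C *m (B *m T) by rewrite mulmxA -PC.
by rewrite -{2}(mulmxKpV BT) [RHS]mxtrace_mulC -[X in _ = \tr X]mulmxA BC mulmx1.
Qed.

Definition linW (W : lmodType algC) (A : W -> W) := forall a u v, A (a *: u + v) = a *: A u + A v.

Lemma linW0 (W : lmodType algC) (A : W -> W) : linW A -> A 0 = 0.
Proof.
move=> h; have e := h 1 0 0; rewrite !scale1r addr0 in e.
by apply: (addrI (A 0)); rewrite addr0 -e.
Qed.

Lemma linW_sum (W : lmodType algC) (A : W -> W) I (s : seq I) (x : I -> algC) (u : I -> W) :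
  linW A -> A (\sum_(i <- s) x i *: u i) = \sum_(i <- s) x i *: A (u i).
Proof.
move=> h; elim: s => [|i s IH]; first by rewrite !big_nil linW0.
by rewrite !big_cons h IH.
Qed.

Lemma expand_sum (W : lmodType algC) r r' (x : 'I_r -> algC) (y : 'I_r -> 'I_r' -> algC) (u : 'I_r' -> W) :
  \sum_i x i *: (\sum_k y i k *: u k) = \sum_k (\sum_i x i * y i k) *: u k.
Proof.
under eq_bigr => i _ do rewrite scaler_sumr.
rewrite exchange_big /=; apply: eq_bigr => k _.
by rewrite scaler_suml; apply: eq_bigr => i _; rewrite scalerA.
Qed.


Lemma trace_on_uniq (W : lmodType algC) (U : W -> Prop) (A : W -> W) c c' :
  linW A -> trace_on U A c -> trace_on U A c' -> c = c'.
Proof.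
move=> linA [r [u [a [Uu ind span Au ->]]]] [r' [u' [a' [Uu' ind' span' Au' ->]]]].
have uniq' : forall x y : 'I_r' -> algC,
    \sum_k x k *: u' k = \sum_k y k *: u' k -> forall k, x k = y k.
  move=> x y e k; apply/eqP; rewrite -subr_eq0; apply/eqP.
  apply: (ind' (fun k => x k - y k)).
  under eq_bigr => i _ do rewrite scalerBl.
  by rewrite sumrB e subrr.
have uniq : forall x y : 'I_r -> algC,
    \sum_k x k *: u k = \sum_k y k *: u k -> forall k, x k = y k.
  move=> x y e k; apply/eqP; rewrite -subr_eq0; apply/eqP.
  apply: (ind (fun k => x k - y k)).
  under eq_bigr => i _ do rewrite scalerBl.
  by rewrite sumrB e subrr.
have [S HS] : exists S : 'I_r' -> 'I_r -> algC,
    forall j, u' j = \sum_i S j i *: u i.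
  apply: (@fin_all_exists _ (fun _ => 'I_r -> algC)
     (fun j S => u' j = \sum_i S i *: u i)) => j.
  have [lam e] := span (u' j) (Uu' j).
  by exists lam.
have [T HT] : exists T : 'I_r -> 'I_r' -> algC,
    forall i, u i = \sum_k T i k *: u' k.
  apply: (@fin_all_exists _ (fun _ => 'I_r' -> algC)
     (fun i T => u i = \sum_k T k *: u' k)) => i.
  have [lam e] := span' (u i) (Uu i).
  by exists lam.
set Sm : 'M_(r, r') := \matrix_(i, j) S j i.
set Tm : 'M_(r', r) := \matrix_(k, i) T i k.
have delta' : forall j, u' j = \sum_k (j == k)%:R *: u' k.
  move=> j; rewrite (bigD1 j) //= eqxx scale1r big1 ?addr0 // => k /negbTE.
  by rewrite eq_sym => ->; rewrite scale0r.
have STm : Sm *m Tm = 1%:M.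
  apply/matrixP => i i'; rewrite !mxE.
  have e : u i' = \sum_l (\sum_k T i' k * S k l) *: u l.
    by rewrite {1}HT; under eq_bigr => k _ do rewrite HS; rewrite expand_sum.
  have delta : u i' = \sum_l (i' == l)%:R *: u l.
    rewrite (bigD1 i') //= eqxx scale1r big1 ?addr0 // => k /negbTE.
    by rewrite eq_sym => ->; rewrite scale0r.
  have := uniq _ _ (etrans (esym e) delta) i.
  rewrite eq_sym => <-; apply: eq_bigr => k _; rewrite !mxE mulrC.
  by [].
have e' : forall j, A (u' j) = \sum_k (Tm *m a *m Sm) k j *: u' k.
  move=> j; rewrite HS linW_sum //.
  under eq_bigr => i _ do rewrite Au.
  under eq_bigr => i _ do (under eq_bigr => l _ do rewrite HT).
  under eq_bigr => i _ do rewrite expand_sum.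
  rewrite expand_sum; apply: eq_bigr => k _; congr (_ *: _).
  rewrite [RHS]mxE; apply: eq_bigr => i _; rewrite mxE big_distrr big_distrl /=.
  apply: eq_bigr => l _; rewrite !mxE.
  by rewrite mulrC (mulrC (a l i)).
have ea : a' = Tm *m a *m Sm.
  apply/matrixP => k j; have := uniq' _ _ (etrans (esym (Au' j)) (e' j)) k.
  by [].
by rewrite ea mxtrace_mulC mulmxA STm mul1mx.
Qed.

Definition pidx n (w : 'S_n) (v : 'I_(n * n)) : 'I_(n * n) :=
  mxvec_index (w (rowv v)) (colv v).

Lemma rowcolK n (v : 'I_(n * n)) : mxvec_index (rowv v) (colv v) = v.
Proof. by case/mxvec_indexP: v => i j; rewrite rowvE colvE. Qed.

Lemma pidx_inj n (w : 'S_n) : injective (pidx w).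
Proof.
move=> v1 v2 h.
have e1 := congr1 (@rowv n) h; have e2 := congr1 (@colv n) h.
rewrite /pidx !rowvE in e1; rewrite /pidx !colvE in e2.
by rewrite -(rowcolK v1) -(rowcolK v2) (perm_inj e1) e2.
Qed.

Definition piw n (w : 'S_n) : 'S_(n * n) := perm (@pidx_inj n w).

Lemma tupL_perm n (w : 'S_n) v :
  tnth [tuple mxvec (map_mx (fun c => c%:MP) (perm_mx w) *m Xmat n) 0 v | v < n * n] v
  = 'X_(piw w v).
Proof.
rewrite tnth_mktuple permE /pidx; case/mxvec_indexP: v => i j.
rewrite mxvecE rowvE colvE mxE (bigD1 (w i)) //= big1 ?addr0.
  by rewrite XmatE mxE /perm_mx !mxE eqxx mul1r.
by move=> l /negbTE ne; rewrite mxE /perm_mx !mxE eq_sym ne mul0r.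
Qed.

Lemma actL_perm n m (w : 'S_n) (f : VPol n m) l :
  actL (perm_mx w) f l = msym (piw w) (f l).
Proof.
rewrite ffunE /comp_mpoly /msym /mmap; apply: eq_bigr => mm _; congr (_ * _).
by rewrite /mmap1; apply: eq_bigr => i _; rewrite tupL_perm.
Qed.

Lemma tupR_diag n (t : 'I_n -> algC) v :
  tnth [tuple mxvec (Xmat n *m map_mx (fun c => c%:MP) (diag_mx (\row_i t i))) 0 v
         | v < n * n] v = t (colv v) *: 'X_v.
Proof.
rewrite tnth_mktuple; case/mxvec_indexP: v => i j.
rewrite mxvecE colvE mxE (bigD1 j) //= big1 ?addr0.
  by rewrite XmatE !mxE eqxx mulr1n mulrC mul_mpolyC.
by move=> l /negbTE ne; rewrite XmatE !mxE ne mulr0n mulr0.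
Qed.

Lemma comp_scaleX k (p : {mpoly algC[k]}) (c : 'I_k -> algC)
  (lq : k.-tuple {mpoly algC[k]}) X :
  (forall i, tnth lq i = c i *: 'X_i) ->
  (p \mPo lq)@_X = p@_X * \prod_i c i ^+ X i.
Proof.
move=> h; rewrite comp_mpolyEX raddf_sum /=.
have -> : p@_X = (\sum_(m <- msupp p) p@_m *: 'X_[m])@_X by rewrite -mpolyE.
rewrite raddf_sum /= mulr_suml; apply: eq_bigr => m _.
rewrite comp_mpolyX (eq_bigr (fun i => c i ^+ m i *: 'X_i ^+ m i)); last first.
  by move=> i _; rewrite h exprZn.
rewrite scaler_prod -mpolyXE_id !mcoeffZ !mcoeffX.
by case: eqP => [->|_]; rewrite ?mulr0 ?mul0r ?mulr1.
Qed.

Definition tw n (t : 'I_n -> algC) (X : 'X_{1..n * n}) : algC :=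
  \prod_(v < n * n) t (colv v) ^+ X v.

Lemma act_diag_coef n m (t : 'I_n -> algC) (f : VPol n m) k X :
  ((Defs.act (diag_mx (\row_i t i)) f) k)@_X = (f k)@_X * tw t X.
Proof. by rewrite ffunE (comp_scaleX _ (c := fun v => t (colv v))) // => v; rewrite tupR_diag. Qed.

Notation Ix n m d := ('X_{1..(n * n) < d.+1} * 'I_m)%type.

Definition ixv n m d (i : 'I_#|{: Ix n m d}|) : Ix n m d := enum_val i.
Definition ixr n m d (p : Ix n m d) : 'I_#|{: Ix n m d}| := enum_rank p.
Lemma ixvK n m d : cancel (@ixv n m d) (@ixr n m d).
Proof. exact: enum_valK. Qed.
Lemma ixrK n m d : cancel (@ixr n m d) (@ixv n m d).
Proof. exact: enum_rankK. Qed.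

Definition coord n m d (f : VPol n m) : 'rV[algC]_#|{: Ix n m d}| :=
  \row_i (f (ixv i).2)@_((ixv i).1 : 'X_{1..n * n}).

Definition embd n m d (v : 'rV[algC]_#|{: Ix n m d}|) : VPol n m :=
  [ffun k => \sum_(X : 'X_{1..(n * n) < d.+1} | mdeg X == d)
      v 0 (ixr ((X, k) : Ix n m d)) *: 'X_[X]].

Arguments embd : clear implicits.
Arguments coord {n m} d f.

Lemma embd_homog n m d v : homV d (embd n m d v).
Proof.
move=> k; rewrite ffunE; apply: rpred_sum => X /eqP hX; apply: rpredZ.
by rewrite dhomogX /= hX.
Qed.

Lemma msize_homog k d (p : {mpoly algC[k]}) : p \is d.-homog -> (msize p <= d.+1)%N.
Proof.
move=> h; rewrite msizeE; apply/bigmax_leqP_seq => mm mp _.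
by rewrite (dhomog_mf h mp).
Qed.

Lemma embd_coord n m d (f : VPol n m) : homV d f -> embd n m d (coord d f) = f.
Proof.
move=> h; apply/ffunP => k; rewrite ffunE.
rewrite [RHS](mpolywE (msize_homog (h k))) [RHS](bigID (fun X : 'X_{1..(n * n) < d.+1} => mdeg X == d)) /=.
rewrite [X in _ = _ + X]big1 ?addr0.
  by apply: eq_bigr => X _; rewrite mxE ixrK.
by move=> X hX; rewrite (dhomog_nemf_coeff (h k)) ?scale0r.
Qed.

Lemma coef_embd n m d v k (Z : 'X_{1..n * n}) :
  (embd n m d v k)@_Z =
  \sum_(X : 'X_{1..(n * n) < d.+1} | mdeg X == d)
     v 0 (ixr ((X, k) : Ix n m d)) * (val X == Z)%:R.
Proof.
by rewrite ffunE raddf_sum; apply: eq_bigr => X _ /=; rewrite mcoeffZ mcoeffX.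
Qed.

Lemma coord_embd n m d v i :
  coord d (embd n m d v) 0 i = if mdeg (ixv i).1 == d then v 0 i else 0.
Proof.
rewrite mxE coef_embd; case: ifP => hd.
  rewrite (bigD1 (ixv i).1) //= eqxx mulr1 big1 ?addr0.
    by rewrite -surjective_pairing ixvK.
  by move=> X /andP[_ ne]; rewrite -bmeqP (negbTE ne) mulr0.
rewrite big1 // => X /eqP hX; case: eqP => [e|]; last by rewrite mulr0.
by move: hd; rewrite -e hX eqxx.
Qed.

Definition linF (U V : lmodType algC) (F : U -> V) :=
  forall a u v, F (a *: u + v) = a *: F u + F v.

Lemma linF0 (U V : lmodType algC) (F : U -> V) : linF F -> F 0 = 0.
Proof.
move=> h; have e := h 1 0 0; rewrite !scale1r addr0 in e.
by apply: (addrI (F 0)); rewrite addr0 -e.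
Qed.

Lemma linF_sum (U V : lmodType algC) (F : U -> V) I (s : seq I) x u :
  linF F -> F (\sum_(i <- s) x i *: u i) = \sum_(i <- s) x i *: F (u i).
Proof.
move=> h; elim: s => [|i s IH]; first by rewrite !big_nil linF0.
by rewrite !big_cons h IH.
Qed.

Lemma mul_lin1 N M (F : 'rV[algC]_N -> 'rV[algC]_M) v :
  linF F -> v *m lin1_mx F = F v.
Proof.
move=> h; rewrite [in RHS](row_sum_delta v) linF_sum // mulmx_sum_row.
by apply: eq_bigr => j _; congr (_ *: _); apply/rowP => k; rewrite !mxE.
Qed.

Lemma coord_lin n m d : linF (@coord n m d).
Proof. by move=> a u v; apply/rowP => i; rewrite !mxE !ffunE mcoeffD mcoeffZ. Qed.

Lemma embd_lin n m d : linF (embd n m d).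
Proof.
move=> a u v; apply/ffunP => k; rewrite !ffunE scaler_sumr -big_split /=.
by apply: eq_bigr => X _; rewrite !mxE scalerDl scalerA.
Qed.

Lemma Rop_lin n m (rG : mx_representation algC [set: 'S_n] m) : linF (Rop rG).
Proof.
move=> a u v; apply: evalV_inj => Q.
rewrite [LHS]evalV_Rop [RHS]evalVD evalVZ !evalV_Rop scalerA mulrC -scalerA -scalerDr.
congr (_ *: _).
rewrite scaler_sumr -big_split /=; apply: eq_bigr => w _.
by rewrite evalVD evalVZ mulmxDr scalemxAr.
Qed.

Definition Rm n m (rG : mx_representation algC [set: 'S_n] m) d :=
  lin1_mx (fun v => coord d (Rop rG (embd n m d v))).

Lemma mulRm n m rG d v : v *m @Rm n m rG d = coord d (Rop rG (embd n m d v)).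
Proof.
apply: mul_lin1 => a u w.
by rewrite embd_lin Rop_lin coord_lin.
Qed.

Definition Tm n m d (t : 'I_n -> algC) :=
  diag_mx (\row_(i < #|{: Ix n m d}|)
     if mdeg (ixv i).1 == d then tw t (ixv i).1 else 0).

Arguments Tm : clear implicits.
Arguments Rm {n m} rG d.

Lemma mulTm n m d t v :
  v *m Tm n m d t = coord d (Defs.act (diag_mx (\row_i t i)) (embd n m d v)).
Proof.
apply/rowP => j; rewrite mul_mx_diag !mxE act_diag_coef.
have := coord_embd v j; rewrite mxE => ->.
by case: ifP; rewrite ?mul0r ?mulr0.
Qed.

Lemma rows_eq N M (A B : 'M[algC]_(N, M)) : (forall v : 'rV_N, v *m A = v *m B) -> A = B.
Proof. by move=> h; apply/row_matrixP => i; rewrite !rowE h. Qed.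

Lemma Rm_idem n m rG d : @Rm n m rG d *m Rm rG d = Rm rG d.
Proof.
apply: rows_eq => v; rewrite mulmxA !mulRm embd_coord ?Rop_idem //.
by apply: Rop_homog; apply: embd_homog.
Qed.

Lemma Rm_Tm n m rG d t : @Rm n m rG d *m Tm n m d t = Tm n m d t *m Rm rG d.
Proof.
apply: rows_eq => v; rewrite !mulmxA mulRm mulTm mulRm mulTm !embd_coord.
- by rewrite Rop_act.
- by apply: act_homog; apply: embd_homog.
- by apply: Rop_homog; apply: embd_homog.
Qed.

Lemma embd_rows n m d r (B : 'M_(r, #|{: Ix n m d}|)) (x : 'rV_r) :
  embd n m d (x *m B) = \sum_i x 0 i *: embd n m d (row i B).
Proof. by rewrite mulmx_sum_row linF_sum //; apply: embd_lin. Qed.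

Theorem trace_on_Ind n m (rG : mx_representation algC [set: 'S_n] m) d t :
  trace_on (IndV rG d) (Defs.act (diag_mx (\row_i t i)))
    (\tr (Rm rG d *m Tm n m d t)).
Proof.
set P := Rm rG d; set T := Tm n m d t.
have [a [BTa tra]] := trace_restrict (Rm_idem rG d) (Rm_Tm rG d t).
set B := row_base P in BTa.
have BP : (B <= P)%MS by rewrite eq_row_base.
have PB : (P <= B)%MS by rewrite eq_row_base.
have inP : forall x : 'rV_#|{: Ix n m d}|, (x <= P)%MS -> x = x *m P.
  move=> x /submxP [D ->]; by rewrite -mulmxA Rm_idem.
exists (\rank P), (fun i => embd n m d (row i B)), a^T; split.
- move=> i; have /submxP [D ->] : (row i B <= P)%MS.
    exact: submx_trans (row_sub i B) BP.
  rewrite mulRm embd_coord; last by apply: Rop_homog; apply: embd_homog.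
  by apply: Rop_IndV; apply: embd_homog.
- move=> lam h0; set x := \row_i lam i.
  have e0 : embd n m d (x *m B) = 0.
    by rewrite embd_rows -[RHS]h0; apply: eq_bigr => i _; rewrite mxE.
  have xB0 : x *m B = 0.
    rewrite (inP _ (mulmx_sub x BP)) mulRm e0 (linF0 (@Rop_lin n m rG)).
    by apply: (linF0 (@coord_lin n m d)).
  have x0 : x = 0.
    apply: (row_free_inj (row_base_free P)); by rewrite xB0 mul0mx.
  by move=> i; move: (congr1 (fun y : 'rV_(\rank P) => y 0 i) x0); rewrite !mxE.
- move=> f hf; have hom := hf.1; have Rf := IndV_Rop hf.
  have cP : coord d f = coord d f *m P.
    by rewrite mulRm embd_coord // Rf.
  have cB : (coord d f <= B)%MS.
    by rewrite cP; apply: submx_trans PB; apply: submxMl.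
  exists (fun i => (coord d f *m pinvmx B) 0 i).
  by rewrite -embd_rows mulmxKpV // embd_coord.
- move=> j; rewrite -[LHS](@embd_coord n m d); last first.
    by apply: act_homog; apply: embd_homog.
  rewrite -mulTm -row_mul BTa row_mul embd_rows.
  by apply: eq_bigr => i _; rewrite !mxE.
- by rewrite mxtrace_tr tra.
Qed.

Lemma big_mxvec_idx (R : Type) (idx : R) (op : Monoid.com_law idx) n
  (F : 'I_(n * n) -> R) :
  \big[op/idx]_v F v = \big[op/idx]_i \big[op/idx]_j F (mxvec_index i j).
Proof.
rewrite (reindex (uncurry (@mxvec_index n n))) /=; last exact: curry_mxvec_bij.
by rewrite pair_bigA; apply: eq_bigr => -[i j].
Qed.

Definition mperm k (Z : 'X_{1..k}) (s : 'S_k) : 'X_{1..k} :=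
  [multinom Z (s v) | v < k].

Lemma coef_Rop n m (rG : mx_representation algC [set: 'S_n] m) (f : VPol n m) k Z :
  ((Rop rG f) k)@_Z = (n`!%:R)^-1 *
     \sum_(w : 'S_n) \sum_l rG (w^-1)%g k l * (f l)@_(mperm Z (piw w)).
Proof.
rewrite /Rop ffunE sum_ffunE mcoeffZ raddf_sum /=; congr (_ * _).
apply: eq_bigr => w _; rewrite ffunE raddf_sum /=; apply: eq_bigr => l _.
by rewrite mcoeffZ actL_perm mcoeff_sym.
Qed.

Lemma coef_embd_e n m d i l (Z : 'X_{1..n * n}) :
  (embd n m d (delta_mx 0 i) l)@_Z =
  (((ixv i).2 == l) && (val (ixv i).1 == Z) && (mdeg (ixv i).1 == d))%:R.
Proof.
rewrite coef_embd big_mkcond /= (bigD1 (ixv i).1) //= big1 ?addr0; last first.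
  move=> X ne; case: ifP => // _; rewrite mxE /=.
  case: eqP => [e|]; last by rewrite mul0r.
  by move: ne; rewrite -e ixrK /= eqxx.
rewrite mxE /=; case: (eqVneq (ixv i).2 l) => [<-|ne].
  rewrite -surjective_pairing ixvK eqxx /=.
  by case: (mdeg _ == d); case: (_ == Z); rewrite ?mul1r.
have -> : (ixr ((ixv i).1, l) == i) = false.
  apply/negbTE; apply: contra ne => /eqP e.
  by move: (congr1 (@ixv n m d) e); rewrite ixrK => <-.
by case: ifP; rewrite ?mul0r.
Qed.

Lemma Rm_diag n m (rG : mx_representation algC [set: 'S_n] m) d i :
  Rm rG d i i = if mdeg (ixv i).1 == d then
     (n`!%:R)^-1 * \sum_(w : 'S_n) rG (w^-1)%g (ixv i).2 (ixv i).2 *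
        (val (ixv i).1 == mperm (ixv i).1 (piw w))%:R
     else 0.
Proof.
rewrite /Rm mxE mxE coef_Rop.
case: ifP => hd; last first.
  rewrite big1 ?mulr0 // => w _; rewrite big1 // => l _.
  by rewrite coef_embd_e hd andbF mulr0.
congr (_ * _); apply: eq_bigr => w _.
rewrite (bigD1 (ixv i).2) //= big1 ?addr0; last first.
  by move=> l ne; rewrite coef_embd_e eq_sym (negbTE ne) mulr0.
by rewrite coef_embd_e eqxx hd andbT.
Qed.

Definition colsum n (X : 'X_{1..n * n}) : 'X_{1..n} :=
  [multinom (\sum_(i < n) X (mxvec_index i j))%N | j < n].

Lemma mdeg_colsum n (X : 'X_{1..n * n}) : mdeg (colsum X) = mdeg X.
Proof.
rewrite !mdegE big_mxvec_idx exchange_big /=; apply: eq_bigr => j _.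
by rewrite mnmE.
Qed.

Lemma eval_colsum n (t : 'I_n -> algC) (X : 'X_{1..n * n}) :
  'X_[colsum X].@[t] = tw t X.
Proof.
rewrite mevalX /tw big_mxvec_idx exchange_big /=; apply: eq_bigr => j _.
rewrite mnmE -prodrXr; apply: eq_bigr => i _.
by rewrite colvE.
Qed.

Definition P0 n m (rG : mx_representation algC [set: 'S_n] m) d : {mpoly algC[n]} :=
  \sum_(X : 'X_{1..(n * n) < d.+1} | mdeg X == d)
    ((n`!%:R)^-1 * \sum_(w : 'S_n) \tr (rG (w^-1)%g) *
        (val X == mperm X (piw w))%:R) *: 'X_[colsum X].

Lemma P0_eval n m (rG : mx_representation algC [set: 'S_n] m) d t :
  (P0 rG d).@[t] = \tr (Rm rG d *m Tm n m d t).
Proof.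
rewrite /mxtrace.
under [RHS]eq_bigr => i _ do rewrite mul_mx_diag mxE Rm_diag mxE.
rewrite [RHS](reindex (@ixr n m d)) /=; last first.
  by exists (@ixv n m d) => x _; [apply: ixrK | apply: ixvK].
under [RHS]eq_bigr => p _ do rewrite ixrK.
rewrite -(pair_bigA _ (fun (X : 'X_{1..(n * n) < d.+1}) (k : 'I_m) =>
  (if mdeg X == d then (n`!%:R)^-1 * \sum_(w : 'S_n) rG (w^-1)%g k k *
     (val X == mperm X (piw w))%:R else 0) * (if mdeg X == d then tw t X else 0))) /=.
rewrite /P0 raddf_sum /= big_mkcond /=.
apply: eq_bigr => X _; case: ifP => hd; last first.
  by rewrite big1 // => k _; rewrite mul0r.
rewrite mevalZ eval_colsum -mulr_suml; congr (_ * _).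
rewrite -mulr_sumr; congr (_ * _); rewrite exchange_big /=.
apply: eq_bigr => w _; rewrite -mulr_suml; congr (_ * _).
Qed.

Theorem is_ch_Ind_P0 n m (rG : mx_representation algC [set: 'S_n] m) d :
  is_ch_Ind rG d (P0 rG d).
Proof. by move=> t _; rewrite P0_eval; apply: trace_on_Ind. Qed.

Definition cycT n (w : 'S_n) := {C : {set 'I_n} | C \in porbits w}.

Lemma porbit_in n (w : 'S_n) i : porbit w i \in porbits w.
Proof. exact: imset_f. Qed.

Definition cyc_of n (w : 'S_n) (i : 'I_n) : cycT w := exist _ (porbit w i) (porbit_in w i).

Lemma cyc_ofE n (w : 'S_n) i (C : cycT w) : (cyc_of w i == C) = (i \in val C).
Proof.
case: C => C /= hC; rewrite -val_eqE /=.
have /imsetP [x _ e] := hC; rewrite e; exact: eq_porbit_mem.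
Qed.

Lemma prod_porbits (R : comRingType) n (w : 'S_n) (F : {set 'I_n} -> R) :
  \prod_(C in porbits w) F C = \prod_(C : cycT w) F (val C).
Proof. by rewrite big_sub. Qed.

Lemma cyc_prod (R : comRingType) n (w : 'S_n) (J : finType) (g : cycT w -> J)
  (z : J -> R) :
  \prod_(C : cycT w) z (g C) ^+ #|val C| = \prod_i z (g (cyc_of w i)).
Proof.
rewrite [RHS](partition_big (cyc_of w) xpredT) //=; apply: eq_bigr => C _.
rewrite -prodr_const; apply: eq_big => i; first by rewrite cyc_ofE.
by move=> hi; congr (z (g _)); apply/esym/eqP; rewrite cyc_ofE.
Qed.

Lemma fixed_iter n (w : 'S_n) (J : Type) (x : 'I_n -> J) :
  (forall i, x (w i) = x i) -> forall k i, x ((w ^+ k)%g i) = x i.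
Proof.
move=> h k i; rewrite permX; elim: k => [//|k IH].
by rewrite iterS h IH.
Qed.

Lemma cycle_identity (R : comRingType) (J : finType) (y0 : J) n (w : 'S_n)
  (z : J -> R) :
  \prod_(C in porbits w) \sum_(y : J) z y ^+ #|C| =
  \sum_(x : {ffun 'I_n -> J} | [forall i, x (w i) == x i]) \prod_i z (x i).
Proof.
rewrite prod_porbits bigA_distr_bigA /=.
set h := fun g : {ffun cycT w -> J} => [ffun i => g (cyc_of w i)].
set h' := fun x : {ffun 'I_n -> J} =>
  [ffun C : cycT w => odflt y0 (omap x [pick k in val C])].
have hh' : forall x : {ffun 'I_n -> J}, [forall i, x (w i) == x i] -> h (h' x) = x.
  move=> x /forallP fx; apply/ffunP => i; rewrite !ffunE.
  case: pickP => [k /= hk | none]; last by have := none i; rewrite /= porbit_id.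
  have [j ->] := porbitP _ _ _ hk.
  by apply: fixed_iter => l; apply/eqP.
rewrite [RHS](reindex_onto h h' hh'); apply: eq_big => g.
  apply/esym/andP; split.
    apply/forallP => i; rewrite !ffunE.
    have -> : cyc_of w (w i) = cyc_of w i.
      apply/val_inj => /=; have := porbit_perm w 1 i; rewrite expg1 => ->.
      by [].
    by [].
  apply/eqP/ffunP => C; rewrite ffunE.
  case: pickP => [k /= hk | none].
    rewrite ffunE; congr (g _); apply/eqP; by rewrite cyc_ofE.
  case: C none => C /= hC none; have /imsetP [x _ e] := hC.
  exfalso; have nx := none x; rewrite /= e porbit_id in nx.
  by [].
move=> _; rewrite cyc_prod; apply: eq_bigr => i _; by rewrite ffunE.
Qed.

Definition rowm n (X : 'X_{1..n * n}) (i : 'I_n) : 'X_{1..n} :=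
  [multinom X (mxvec_index i j) | j < n].
Definition mono n (x : 'I_n -> 'X_{1..n}) : 'X_{1..n * n} :=
  [multinom x (rowv v) (colv v) | v < n * n].

Lemma rowm_mono n (x : 'I_n -> 'X_{1..n}) i : rowm (mono x) i = x i.
Proof. by apply/mnmP => j; rewrite !mnmE rowvE colvE. Qed.

Lemma mono_rowm n (X : 'X_{1..n * n}) : mono (rowm X) = X.
Proof. by apply/mnmP => v; rewrite !mnmE rowcolK. Qed.

Lemma mdeg_rowm n (X : 'X_{1..n * n}) i : (mdeg (rowm X i) <= mdeg X)%N.
Proof.
rewrite [X in (_ <= X)%N]mdegE big_mxvec_idx (bigD1 i) //= mdegE.
have -> : (\sum_(j < n) rowm X i j = \sum_(j < n) X (mxvec_index i j))%N.
  by apply: eq_bigr => j _; rewrite mnmE.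
exact: leq_addr.
Qed.

Lemma mdeg_mono n (x : 'I_n -> 'X_{1..n}) : mdeg (mono x) = mdeg (\sum_i x i)%MM.
Proof.
rewrite mdeg_sum mdegE big_mxvec_idx; apply: eq_bigr => i _.
by rewrite mdegE; apply: eq_bigr => j _; rewrite mnmE rowvE colvE.
Qed.

Lemma colsum_rows n (X : 'X_{1..n * n}) : colsum X = (\sum_i rowm X i)%MM.
Proof. by apply/mnmP => j; rewrite mnmE mnm_sumE; apply: eq_bigr => i _; rewrite mnmE. Qed.

Lemma fixed_rows n (w : 'S_n) (X : 'X_{1..n * n}) :
  (X == mperm X (piw w)) = [forall i, rowm X (w i) == rowm X i].
Proof.
apply/eqP/forallP => [e i|h].
  apply/eqP/mnmP => j; rewrite !mnmE.
  have := congr1 (fun Y : 'X_{1..n * n} => Y (mxvec_index i j)) e.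
  by rewrite /= mnmE permE /pidx rowvE colvE => ->.
apply/mnmP => v; rewrite mnmE permE /pidx.
case/mxvec_indexP: v => i j; rewrite rowvE colvE.
have := congr1 (fun Y : 'X_{1..n} => Y j) (eqP (h i)).
by rewrite /= !mnmE => ->.
Qed.

Lemma sum_ind2 (T : finType) (P b1 b2 : pred T) :
  \sum_(X | P X) ((b1 X)%:R * (b2 X)%:R : algC) =
  #|[set X | P X && b1 X && b2 X]|%:R.
Proof.
rewrite -sum1_card natr_sum big_mkcond [RHS]big_mkcond /=.
apply: eq_bigr => X _; rewrite inE.
by case: (P X); case: (b1 X); case: (b2 X); rewrite /= ?mulr0 ?mul0r ?mulr1.
Qed.

Lemma sum_ind1 (T : finType) (P b1 : pred T) :
  \sum_(X | P X) ((b1 X)%:R : algC) = #|[set X | P X && b1 X]|%:R.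
Proof.
rewrite -sum1_card natr_sum big_mkcond [RHS]big_mkcond /=.
by apply: eq_bigr => X _; rewrite inE; case: (P X); case: (b1 X).
Qed.

Lemma count_bij n (w : 'S_n) (a : 'X_{1..n}) b :
  (mdeg a < b.+1)%N ->
  #|[set X : 'X_{1..(n * n) < (mdeg a).+1} | (mdeg X == mdeg a) &&
       (val X == mperm X (piw w)) && (colsum X == a)]| =
  #|[set x : {ffun 'I_n -> 'X_{1..n < b.+1}} |
       [forall i, x (w i) == x i] && ((\sum_i val (x i))%MM == a)]|.
Proof.
move=> hb; set d := mdeg a.
set A := [set X : 'X_{1..(n * n) < d.+1} | _].
set B := [set x : {ffun 'I_n -> 'X_{1..n < b.+1}} | _].
set psi := fun X : 'X_{1..(n * n) < d.+1} =>
  [ffun i => insubd (bm0 : 'X_{1..n < b.+1}) (rowm (val X) i)].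
set phi := fun x : {ffun 'I_n -> 'X_{1..n < b.+1}} =>
  insubd (bm0 : 'X_{1..(n * n) < d.+1}) (mono (fun i => val (x i))).
have inA : forall X, (X \in A) = [&& mdeg X == d, val X == mperm X (piw w) & colsum X == a].
  by move=> X; rewrite inE andbA.
have inB : forall x, (x \in B) = [forall i, x (w i) == x i] && ((\sum_i val (x i))%MM == a).
  by move=> x; rewrite inE.
have valpsi' : forall (X : 'X_{1..(n * n) < d.+1}) i, X \in A -> val (psi X i) = rowm (val X) i.
  move=> X i _; rewrite ffunE val_insubd.
  by rewrite (leq_ltn_trans (mdeg_rowm _ _)) // (leq_trans (bmdeg X)).
have valphi : forall x, x \in B -> val (phi x) = mono (fun i => val (x i)).
  move=> x; rewrite inB => /andP[_ /eqP s]; rewrite val_insubd mdeg_mono s.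
  by rewrite ltnSn.
have AB : forall X, X \in A -> psi X \in B.
  move=> X hX; move: (hX); rewrite inA => /and3P[_ fx cx].
  rewrite inB; apply/andP; split.
    apply/forallP => i; apply/eqP/val_inj; rewrite !valpsi' //.
    by move: fx; rewrite fixed_rows => /forallP/(_ i)/eqP.
  rewrite -(eqP cx) colsum_rows; apply/eqP; apply: eq_bigr => i _.
  by rewrite valpsi'.
have BA : forall x, x \in B -> phi x \in A.
  move=> x hx; move: (hx); rewrite inB => /andP[fx /eqP s].
  rewrite inA !valphi // mdeg_mono s eqxx /=; apply/andP; split.
    rewrite fixed_rows; apply/forallP => i; rewrite !rowm_mono.
    by move/forallP: fx => /(_ i)/eqP ->.
  by rewrite colsum_rows; apply/eqP; rewrite -s; apply: eq_bigr => i _; rewrite rowm_mono.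
have psiK : {in A, cancel psi phi}.
  move=> X hX; apply/val_inj; rewrite val_insubd.
  have e : mono (fun i => val (psi X i)) = val X.
    by apply/mnmP => v; rewrite mnmE valpsi' // mnmE rowcolK.
  by rewrite e bmdeg.
have phiK : {in B, cancel phi psi}.
  move=> x hx; apply/ffunP => i; apply/val_inj.
  rewrite valpsi' ?BA // valphi // rowm_mono.
  by [].
apply/eqP; rewrite eqn_leq; apply/andP; split.
  rewrite -(card_in_imset (can_in_inj psiK)); apply: subset_leq_card.
  by apply/subsetP => y /imsetP [X hX ->]; apply: AB.
rewrite -(card_in_imset (can_in_inj phiK)); apply: subset_leq_card.
by apply/subsetP => y /imsetP [x hx ->]; apply: BA.
Qed.

Lemma psum_comp n b k :
  psum #|{: 'X_{1..n < b}}| k \mPo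
    [tuple 'X_[(enum_val i : 'X_{1..n < b}) : 'X_{1..n}] | i < #|{: 'X_{1..n < b}}|]
  = \sum_(y : 'X_{1..n < b}) ('X_[val y] : {mpoly algC[n]}) ^+ k.
Proof.
rewrite /psum raddf_sum /=.
under eq_bigr => j _ do rewrite rmorphXn /= comp_mpolyXU -tnth_nth tnth_mktuple.
rewrite -(big_enum_val (A := {: 'X_{1..n < b}})
  (fun y : 'X_{1..n < b} => ('X_[val y] : {mpoly algC[n]}) ^+ k)).
by apply: eq_bigl => y; rewrite inE.
Qed.

Lemma pleth_coef n (chi : 'CF([set: 'S_n])) b a :
  (pleth_trunc n (frob chi) b.+1)@_a =
  (n`!%:R)^-1 * \sum_(w : 'S_n) chi w *
    #|[set x : {ffun 'I_n -> 'X_{1..n < b.+1}} |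
        [forall i, x (w i) == x i] && ((\sum_i val (x i))%MM == a)]|%:R.
Proof.
rewrite /pleth_trunc /frob comp_mpolyZ mcoeffZ (big_morph _ (comp_mpolyD _) (comp_mpoly0 _)).
rewrite raddf_sum /=; congr (_ * _).
apply: eq_bigr => w _; rewrite comp_mpolyZ mcoeffZ; congr (_ * _).
rewrite rmorph_prod /=.
under eq_bigr => C _ do rewrite psum_comp.
rewrite (cycle_identity bm0 w (fun y : 'X_{1..n < b.+1} => ('X_[val y] : {mpoly algC[n]}))).
under eq_bigr => x _ do rewrite mprodXE.
rewrite raddf_sum /= -sum_ind1; apply: eq_bigr => x _.
by rewrite mcoeffX.
Qed.

Lemma act_lin n m (g : 'M[algC]_n) : linW (@Defs.act n m g).
Proof.
move=> a u v; apply: evalV_inj => Q.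
by rewrite evalV_act !evalVD !evalVZ !evalV_act.
Qed.

Lemma P0_homog n m (rG : mx_representation algC [set: 'S_n] m) d :
  P0 rG d \is d.-homog.
Proof.
apply: rpred_sum => X /eqP hX; apply: rpredZ.
by rewrite dhomogX /= mdeg_colsum hX.
Qed.

Lemma P_unique n m (rG : mx_representation algC [set: 'S_n] m) d P :
  is_ch_Ind rG d P -> P = P0 rG d.
Proof.
move=> hP; apply/eqP; rewrite -subr_eq0; apply/eqP; apply: meval_inj_nz => t ht.
rewrite mevalB (trace_on_uniq (@act_lin n m _) (hP _ ht) (is_ch_Ind_P0 rG d ht)).
by rewrite subrr.
Qed.

Lemma fixed_inv n (J : eqType) (w : 'S_n) (x : 'I_n -> J) :
  [forall i, x (w i) == x i] = [forall i, x ((w^-1)%g i) == x i].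
Proof.
apply/forallP/forallP => h i.
  by have := h ((w^-1)%g i); rewrite permKV eq_sym.
by have := h (w i); rewrite permK eq_sym.
Qed.

Lemma P0_coef n m (rG : mx_representation algC [set: 'S_n] m) a b :
  (mdeg a < b.+1)%N ->
  (P0 rG (mdeg a))@_a = (pleth_trunc n (frob (cfRepr rG)) b.+1)@_a.
Proof.
move=> hb; rewrite pleth_coef /P0 raddf_sum /=.
under eq_bigr => X _ do rewrite mcoeffZ mcoeffX -mulrA mulr_suml.
rewrite -mulr_sumr; congr (_ * _).
rewrite exchange_big /= [RHS](reindex_inj (@invg_inj _)) /=; apply: eq_bigr => w _.
rewrite cfunE in_setT mulr1n.
under eq_bigr => X _ do rewrite -mulrA.
rewrite -mulr_sumr; congr (_ * _).
rewrite sum_ind2 (count_bij w hb); congr (_%:R); apply: eq_card => x.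
by rewrite !inE fixed_inv.
Qed.

Theorem theorem8 (n m : nat) (rG : mx_representation algC [set: 'S_n] m) :
  (exists P : nat -> {mpoly algC[n]}, forall d, is_ch_Ind rG d (P d)) /\
  (forall P : nat -> {mpoly algC[n]}, (forall d, is_ch_Ind rG d (P d)) ->
     forall a : 'X_{1..n}, exists c : algC,
       series_coeff P a c /\ pleth_coeff (frob (cfRepr rG)) a c).
Proof.
split; first by exists (P0 rG); apply: is_ch_Ind_P0.
move=> P hP a; exists ((P0 rG (mdeg a))@_a); split.
  exists (mdeg a).+1 => D hD.
  rewrite (bigD1 (Ordinal hD)) //= big1 ?addr0 ?(P_unique (hP _)) // => j ne.
  rewrite (P_unique (hP j)) (dhomog_nemf_coeff (P0_homog rG j)) //.
  by apply: contra ne => /eqP e; apply/eqP/val_inj; rewrite /= e.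
exists (mdeg a).+1 => b hb; case: b hb => // b hb.
by rewrite (P0_coef rG hb).
Qed.
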